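(* Let $(\mathfrak g,\mathfrak g^* )$ be a Hom-Lie bialgebra (with $\mathfrak g$ finite-dimensional, Hom-Lie algebras $(\mathfrak{g},[\cdot,\cdot]_{\mathfrak{g}},\phi_{\mathfrak{g}})$ and $(\mathfrak g^*,[\cdot,\cdot]_{\mathfrak g^*},\phi_{\mathfrak g}^* )$ and cobracket $\Delta$). Then the canonical structure on $\mathfrak g\oplus\mathfrak g^*$ described below is a Hom-Lie bialgebra, and the maps $\mathfrak g\to\mathfrak g\oplus\mathfrak g^*$, $x\mapsto\phi_{\mathfrak g}(x)$, and $\mathfrak g^*\to\mathfrak g\oplus\mathfrak g^*$, $a\mapsto\phi_{\mathfrak g}^*(a)$, are homomorphisms of Hom-Lie bialgebras from $(\mathfrak g,\Delta)$ and from $(\mathfrak g^*,-\Delta_{\mathfrak g^*})$ respectively, where $\langle\Delta_{\mathfrak g^*}(a),x\otimes y\rangle=\langle a,[x,y]_{\mathfrak g}\rangle$.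
   Context: A Hom-Lie algebra $(\mathfrak{h},[\cdot,\cdot]_{\mathfrak{h}},\phi_{\mathfrak{h}})$: skew-symmetric bilinear bracket and linear map $\phi_{\mathfrak h}$ with $\phi_{\mathfrak h}[x,y]=[\phi_{\mathfrak h}x,\phi_{\mathfrak h}y]$ and $[\phi_{\mathfrak h}(x),[y,z]]+[\phi_{\mathfrak h}(y),[z,x]]+[\phi_{\mathfrak h}(z),[x,y]]=0$; weakly involutive if $[\phi_{\mathfrak h}^2(x),y]=[x,y]$. For $z\in\mathfrak h$, $t\in\mathfrak h\otimes\mathfrak h$: $\mathrm{ad}_zt=(\mathrm{ad}_z\otimes\phi_{\mathfrak h}+\phi_{\mathfrak h}\otimes\mathrm{ad}_z)t$, $\mathrm{ad}_zy=[z,y]$. A Hom-Lie bialgebra $(\mathfrak h,\Delta_{\mathfrak h})$ (finite-dimensional) is a weakly involutive Hom-Lie algebra $\mathfrak h$ with a linear map $\Delta_{\mathfrak h}:\mathfrak h\to\mathfrak h\otimes\mathfrak h$ such that $\mathfrak h^*$ with bracket $\langle[a,b]_{\mathfrak h^*},x\rangle=\langle\Delta_{\mathfrak h}(x),a\otimes b\rangle$ and map $\phi_{\mathfrak h}^*$ is a weakly involutive Hom-Lie algebra and $\Delta_{\mathfrak h}[x,y]=\mathrm{ad}_{\phi_{\mathfrak h}(x)}\Delta_{\mathfrak h}(y)-\mathrm{ad}_{\phi_{\mathfrak h}(y)}\Delta_{\mathfrak h}(x)$; we also write $(\mathfrak h,\mathfrak h^* )$. A homomorphism of Hom-Lie bialgebras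 $f:(\mathfrak h,\Delta_{\mathfrak h})\to(\mathfrak k,\Delta_{\mathfrak k})$ is a linear map with $f[x,y]=[f(x),f(y)]$, $f\phi_{\mathfrak h}=\phi_{\mathfrak k}f$ and $(f\otimes f)\Delta_{\mathfrak h}=\Delta_{\mathfrak k}f$. Canonical structure: let $\mathrm{ad}^\circ_xa\in\mathfrak g^*$ be defined by $\langle\mathrm{ad}^\circ_xa,y\rangle=-\langle a,[\phi_{\mathfrak g}(x),y]_{\mathfrak g}\rangle$ and $\mathfrak{ad}^\circ_ax\in\mathfrak g$ by $\langle\mathfrak{ad}^\circ_ax,b\rangle=-\langle x,[\phi_{\mathfrak g}^*(a),b]_{\mathfrak g^*}\rangle$. On $\mathfrak g\oplus\mathfrak g^*$ take the bracket $[x+a,y+b]_d=[x,y]_{\mathfrak g}+\mathrm{ad}^\circ_xb-\mathrm{ad}^\circ_ya+[a,b]_{\mathfrak g^*}+\mathfrak{ad}^\circ_ay-\mathfrak{ad}^\circ_bx$ and twisting map $\phi_{\mathfrak g}\oplus\phi_{\mathfrak g}^*$; with $\{e_i\}$ a basis of $\mathfrak g$, $\{f_i\}$ the dual basis and $r=\sum_ie_i\otimes f_i$, the cobracket is $\Delta_{\mathcal{HD}}(u)=(\mathrm{ad}_u\otimes(\phi_{\mathfrak g}\oplus\phi_{\mathfrak g}^* )+(\phi_{\mathfrak g}\oplus\phi_{\mathfrak g}^* )\otimes\mathrm{ad}_u)r$ for $u\in\mathfrak g\oplus\mathfrak g^*$ (ad taken in the bracket $[\cdot,\cdot]_d$).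 *)

(* Defs.v *)
(* Finite-dimensional spaces over a field K are modelled as
   row vectors 'rV[K]_n with standard basis e_i = delta_mx 0 i; the dual space
   g^* is 'rV[K]_n with the dual basis (pairing <a,x> = sum_i a_i x_i);
   the tensor square V (x) V is 'M[K]_(n,n), with u (x) v = u^T *m v. *)
From HB Require Import structures.
From mathcomp Require Import all_boot all_order all_algebra.
Set Implicit Arguments. Unset Strict Implicit. Unset Printing Implicit Defensive.
Import Order.TTheory GRing.Theory Num.Theory.
Local Open Scope ring_scope.

Section Defs.
Variable K : fieldType.

Definition bvec (n : nat) (i : 'I_n) : 'rV[K]_n := delta_mx 0 i.

Definition pair (n : nat) (a x : 'rV[K]_n) : K := \sum_i a 0 i * x 0 i.

Definition tpair (n : nat) (t s : 'M[K]_(n, n)) : K :=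
  \sum_i \sum_j t i j * s i j.

Definition tens (n : nat) (u v : 'rV[K]_n) : 'M[K]_(n, n) := u^T *m v.

Definition tmap (n m : nat) (f g : 'rV[K]_n -> 'rV[K]_m) (t : 'M[K]_(n, n))
  : 'M[K]_(m, m) :=
  \sum_i \sum_j t i j *: tens (f (bvec i)) (g (bvec j)).

Definition islinear (n m : nat) (f : 'rV[K]_n -> 'rV[K]_m) : Prop :=
  forall (c : K) x y, f (c *: x + y) = c *: f x + f y.

Definition islinearT (n m : nat) (f : 'rV[K]_n -> 'M[K]_(m, m)) : Prop :=
  forall (c : K) x y, f (c *: x + y) = c *: f x + f y.

Definition HomLie (n : nat) (br : 'rV[K]_n -> 'rV[K]_n -> 'rV[K]_n)
  (phi : 'rV[K]_n -> 'rV[K]_n) : Prop :=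
  [/\ (forall z, islinear (br z)),
      (forall x y, br x y = - br y x),
      islinear phi,
      (forall x y, phi (br x y) = br (phi x) (phi y)) &
      (forall x y z, br (phi x) (br y z) + br (phi y) (br z x)
                     + br (phi z) (br x y) = 0)].

Definition weakly_involutive (n : nat) (br : 'rV[K]_n -> 'rV[K]_n -> 'rV[K]_n)
  (phi : 'rV[K]_n -> 'rV[K]_n) : Prop :=
  forall x y, br (phi (phi x)) y = br x y.

Definition adT (n : nat) (br : 'rV[K]_n -> 'rV[K]_n -> 'rV[K]_n)
  (phi : 'rV[K]_n -> 'rV[K]_n) (z : 'rV[K]_n) (t : 'M[K]_(n, n)) : 'M[K]_(n, n) :=
  tmap (br z) phi t + tmap phi (br z) t.

(* bracket on h^* induced by Delta: <[a,b], x> = <Delta x, a (x) b> *)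
Definition dual_br (n : nat) (Delta : 'rV[K]_n -> 'M[K]_(n, n))
  (a b : 'rV[K]_n) : 'rV[K]_n :=
  \row_k tpair (Delta (bvec k)) (tens a b).

Definition dualmap (n : nat) (phi : 'rV[K]_n -> 'rV[K]_n) (a : 'rV[K]_n)
  : 'rV[K]_n := \row_k pair a (phi (bvec k)).

Definition dual_cobr (n : nat) (br : 'rV[K]_n -> 'rV[K]_n -> 'rV[K]_n)
  (a : 'rV[K]_n) : 'M[K]_(n, n) :=
  \matrix_(i, j) pair a (br (bvec i) (bvec j)).

Definition HomLieBialg (n : nat) (br : 'rV[K]_n -> 'rV[K]_n -> 'rV[K]_n)
  (phi : 'rV[K]_n -> 'rV[K]_n) (Delta : 'rV[K]_n -> 'M[K]_(n, n)) : Prop :=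
  [/\ HomLie br phi /\ weakly_involutive br phi,
      islinearT Delta,
      HomLie (dual_br Delta) (dualmap phi),
      weakly_involutive (dual_br Delta) (dualmap phi) &
      (forall x y, Delta (br x y) =
        adT br phi (phi x) (Delta y) - adT br phi (phi y) (Delta x))].

Definition HomLieBialgHom (n m : nat)
  (br : 'rV[K]_n -> 'rV[K]_n -> 'rV[K]_n) (phi : 'rV[K]_n -> 'rV[K]_n)
  (Delta : 'rV[K]_n -> 'M[K]_(n, n))
  (br' : 'rV[K]_m -> 'rV[K]_m -> 'rV[K]_m) (phi' : 'rV[K]_m -> 'rV[K]_m)
  (Delta' : 'rV[K]_m -> 'M[K]_(m, m)) (f : 'rV[K]_n -> 'rV[K]_m) : Prop :=
  [/\ islinear f,
      (forall x y, f (br x y) = br' (f x) (f y)),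
      (forall x, f (phi x) = phi' (f x)) &
      (forall x, tmap f f (Delta x) = Delta' (f x))].

Section Double.
Variables (n : nat) (br : 'rV[K]_n -> 'rV[K]_n -> 'rV[K]_n)
  (phi : 'rV[K]_n -> 'rV[K]_n) (Delta : 'rV[K]_n -> 'M[K]_(n, n)).

(* <ad°_x a, y> = - <a, [phi x, y]> *)
Definition coad_g (x a : 'rV[K]_n) : 'rV[K]_n :=
  \row_k - pair a (br (phi x) (bvec k)).

(* <ad°_a x, b> = - <x, [phi^* a, b]_*> *)
Definition coad_gs (a x : 'rV[K]_n) : 'rV[K]_n :=
  \row_k - pair x (dual_br Delta (dualmap phi a) (bvec k)).

Definition double_br (u v : 'rV[K]_(n + n)) : 'rV[K]_(n + n) :=
  let x := lsubmx u in let a := rsubmx u in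
  let y := lsubmx v in let b := rsubmx v in
  row_mx (br x y + coad_gs a y - coad_gs b x)
         (coad_g x b - coad_g y a + dual_br Delta a b).

Definition double_phi (u : 'rV[K]_(n + n)) : 'rV[K]_(n + n) :=
  row_mx (phi (lsubmx u)) (dualmap phi (rsubmx u)).

Definition double_r : 'M[K]_(n + n, n + n) :=
  \sum_(i < n) tens (row_mx (bvec i) 0) (row_mx 0 (bvec i)).

Definition double_cobr (u : 'rV[K]_(n + n)) : 'M[K]_(n + n, n + n) :=
  adT double_br double_phi u double_r.

Definition incl_g (x : 'rV[K]_n) : 'rV[K]_(n + n) := row_mx (phi x) 0.
Definition incl_gs (a : 'rV[K]_n) : 'rV[K]_(n + n) := row_mx 0 (dualmap phi a).

End Double.
End Defs.

(* Main.v *)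
Require Import Defs.
From HB Require Import structures.
From mathcomp Require Import all_boot all_order all_algebra.
From mathcomp Require Import ring.
Set Implicit Arguments. Unset Strict Implicit. Unset Printing Implicit Defensive.
Import GRing.Theory.
Local Open Scope ring_scope.

Module Dev.

Section LinGen.
Variables (K : fieldType) (V W : lmodType K) (f : V -> W).
Hypothesis Hf : forall (c : K) x y, f (c *: x + y) = c *: f x + f y.
Lemma lin0 : f 0 = 0.
Proof. by have := Hf (-1) 0 0; rewrite scaler0 addr0 scaleN1r addNr. Qed.
Lemma linD x y : f (x + y) = f x + f y.
Proof. by have := Hf 1 x y; rewrite !scale1r. Qed.
Lemma linZ c x : f (c *: x) = c *: f x.
Proof. by have := Hf c x 0; rewrite !addr0 lin0 addr0. Qed.
Lemma linN x : f (- x) = - f x.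
Proof. by rewrite -scaleN1r linZ scaleN1r. Qed.
Lemma linB x y : f (x - y) = f x - f y.
Proof. by rewrite linD linN. Qed.
Lemma linsum (I : Type) (r : seq I) (P : pred I) (g : I -> V) :
  f (\sum_(i <- r | P i) g i) = \sum_(i <- r | P i) f (g i).
Proof. by elim/big_rec2: _ => [|i u v _ <-]; [exact: lin0 | rewrite linD]. Qed.
End LinGen.

Lemma closeP (K : fieldType) (A B : K) : B = 0 -> A = B -> A = 0.
Proof. by move=> -> . Qed.
Lemma closeN (K : fieldType) (A B : K) : B = 0 -> A = - B -> A = 0.
Proof. by move=> -> ->; rewrite oppr0. Qed.

Lemma close2 (K : fieldType) (A B1 B2 : K) : B1 = 0 -> B2 = 0 -> A = B1 + B2 -> A = 0.
Proof. by move=> -> -> ->; rewrite addr0. Qed.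

Section Basics.
Variables (K : fieldType) (n : nat).
Implicit Types (a b x y : 'rV[K]_n) (t s : 'M[K]_(n, n)).

Definition lin1 (F : 'rV[K]_n -> K) := forall c x y, F (c *: x + y) = c * F x + F y.

Lemma bvecE (i k : 'I_n) : bvec K i 0 k = (i == k)%:R.
Proof. by rewrite /bvec mxE eqxx /= eq_sym. Qed.

Lemma sum_delta (F : 'I_n -> K) i : \sum_k F k * (i == k)%:R = F i.
Proof.
rewrite (bigD1 i) //= eqxx mulr1 big1 ?addr0 //.
by move=> k /negPf; rewrite eq_sym => ->; rewrite mulr0.
Qed.

Lemma pairC a x : pair a x = pair x a.
Proof. by apply: eq_bigr => i _; rewrite mulrC. Qed.
Lemma pair_bvec a k : pair a (bvec K k) = a 0 k.
Proof. rewrite /pair; under eq_bigr do rewrite bvecE. by rewrite sum_delta. Qed.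
Lemma pair_bvecl a k : pair (bvec K k) a = a 0 k.
Proof. by rewrite pairC pair_bvec. Qed.
Lemma pairDZl c a b x : pair (c *: a + b) x = c * pair a x + pair b x.
Proof.
rewrite /pair mulr_sumr -big_split; apply: eq_bigr => i _ /=; rewrite !mxE; ring.
Qed.
Lemma pairDZr c a x y : pair a (c *: x + y) = c * pair a x + pair a y.
Proof. by rewrite pairC pairDZl !(pairC a). Qed.
Lemma pair0l x : pair 0 x = 0.
Proof. by rewrite /pair big1 // => i _; rewrite mxE mul0r. Qed.
Lemma pair0r x : pair x 0 = 0.
Proof. by rewrite pairC pair0l. Qed.
Lemma pairDl a b x : pair (a + b) x = pair a x + pair b x.
Proof. by have := pairDZl 1 a b x; rewrite scale1r mul1r. Qed.
Lemma pairDr a x y : pair a (x + y) = pair a x + pair a y.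
Proof. by rewrite pairC pairDl !(pairC a). Qed.
Lemma pairZl c a x : pair (c *: a) x = c * pair a x.
Proof. by have := pairDZl c a 0 x; rewrite addr0 pair0l addr0. Qed.
Lemma pairZr c a x : pair a (c *: x) = c * pair a x.
Proof. by rewrite pairC pairZl pairC. Qed.
Lemma pairNl a x : pair (- a) x = - pair a x.
Proof. by rewrite -scaleN1r pairZl mulN1r. Qed.
Lemma pairNr a x : pair a (- x) = - pair a x.
Proof. by rewrite pairC pairNl pairC. Qed.
Lemma pairBl a b x : pair (a - b) x = pair a x - pair b x.
Proof. by rewrite pairDl pairNl. Qed.
Lemma pairBr a x y : pair a (x - y) = pair a x - pair a y.
Proof. by rewrite pairDr pairNr. Qed.

Lemma lin1_sum F : lin1 F -> forall y, F y = \sum_k y 0 k * F (bvec K k).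
Proof.
move=> HF y.
have F0 : F 0 = 0 by have := HF (-1) 0 0; rewrite scaler0 addr0 mulN1r addNr.
rewrite [in LHS](row_sum_delta y).
by elim/big_rec2: _ => [|i u v _ <-]; [exact: F0 | rewrite HF].
Qed.

Lemma pair_row F : lin1 F -> forall y, pair (\row_k F (bvec K k)) y = F y.
Proof.
move=> HF y; rewrite (lin1_sum HF y) /pair; apply: eq_bigr => k _.
by rewrite mxE mulrC.
Qed.
Lemma pair_rowr F : lin1 F -> forall y, pair y (\row_k F (bvec K k)) = F y.
Proof. by move=> HF y; rewrite pairC pair_row. Qed.

Lemma vec_ext a b : (forall y, pair a y = pair b y) -> a = b.
Proof. by move=> H; apply/rowP => k; rewrite -!pair_bvec. Qed.
Lemma vec_extr a b : (forall y, pair y a = pair y b) -> a = b.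
Proof. by move=> H; apply: vec_ext => y; rewrite !(pairC _ y). Qed.

Lemma lin1_pair_f a (f : 'rV[K]_n -> 'rV[K]_n) : islinear f -> lin1 (fun x => pair a (f x)).
Proof. by move=> Hf c x y; rewrite Hf pairDZr. Qed.
Lemma lin1_pair_fl a (f : 'rV[K]_n -> 'rV[K]_n) : islinear f -> lin1 (fun x => pair (f x) a).
Proof. by move=> Hf c x y; rewrite Hf pairDZl. Qed.

Lemma tensE a b i j : tens a b i j = a 0 i * b 0 j.
Proof. by rewrite /tens !mxE big_ord1 !mxE. Qed.

Lemma tpair_tens t a b : tpair t (tens a b) = \sum_i \sum_j t i j * (a 0 i * b 0 j).
Proof. by apply: eq_bigr => i _; apply: eq_bigr => j _; rewrite tensE. Qed.

Lemma tpairDZl c t s (u : 'M[K]_(n, n)) : tpair (c *: t + s) u = c * tpair t u + tpair s u.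
Proof.
rewrite /tpair mulr_sumr -big_split; apply: eq_bigr => i _ /=.
rewrite mulr_sumr -big_split; apply: eq_bigr => j _ /=; rewrite !mxE; ring.
Qed.
Lemma tpair0l (u : 'M[K]_(n, n)) : tpair 0 u = 0.
Proof. by rewrite /tpair big1 // => i _; rewrite big1 // => j _; rewrite mxE mul0r. Qed.
Lemma tpairDl t s (u : 'M[K]_(n, n)) : tpair (t + s) u = tpair t u + tpair s u.
Proof. by have := tpairDZl 1 t s u; rewrite scale1r mul1r. Qed.
Lemma tpairZl c t (u : 'M[K]_(n, n)) : tpair (c *: t) u = c * tpair t u.
Proof. by have := tpairDZl c t 0 u; rewrite addr0 tpair0l addr0. Qed.
Lemma tpairNl t (u : 'M[K]_(n, n)) : tpair (- t) u = - tpair t u.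
Proof. by rewrite -scaleN1r tpairZl mulN1r. Qed.
Lemma tpairBl t s (u : 'M[K]_(n, n)) : tpair (t - s) u = tpair t u - tpair s u.
Proof. by rewrite tpairDl tpairNl. Qed.
Lemma tpair_suml (I : Type) (r : seq I) (P : pred I) (M : I -> 'M[K]_(n, n)) (u : 'M[K]_(n, n)) :
  tpair (\sum_(i <- r | P i) M i) u = \sum_(i <- r | P i) tpair (M i) u.
Proof. by elim/big_rec2: _ => [|i A B _ <-]; [exact: tpair0l | rewrite tpairDl]. Qed.

Lemma tpair_tensDZl t c a a' b :
  tpair t (tens (c *: a + a') b) = c * tpair t (tens a b) + tpair t (tens a' b).
Proof.
rewrite !tpair_tens mulr_sumr -big_split; apply: eq_bigr => i _ /=.
rewrite mulr_sumr -big_split; apply: eq_bigr => j _ /=; rewrite !mxE; ring.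
Qed.
Lemma tpair_tensDZr t c a b b' :
  tpair t (tens a (c *: b + b')) = c * tpair t (tens a b) + tpair t (tens a b').
Proof.
rewrite !tpair_tens mulr_sumr -big_split; apply: eq_bigr => i _ /=.
rewrite mulr_sumr -big_split; apply: eq_bigr => j _ /=; rewrite !mxE; ring.
Qed.

Lemma tens_tpair (u v : 'rV[K]_n) a b : tpair (tens u v) (tens a b) = pair u a * pair v b.
Proof.
rewrite tpair_tens /pair mulr_suml; apply: eq_bigr => i _ /=.
rewrite mulr_sumr; apply: eq_bigr => j _; rewrite tensE; ring.
Qed.

Lemma tmap_pair (f g : 'rV[K]_n -> 'rV[K]_n) t a b :
  tpair (tmap f g t) (tens a b) = tpair t (tens (dualmap f a) (dualmap g b)).
Proof.
rewrite /tmap tpair_suml tpair_tens; apply: eq_bigr => i _ /=.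
rewrite tpair_suml; apply: eq_bigr => j _.
by rewrite tpairZl tens_tpair !mxE !(pairC a) !(pairC b).
Qed.

Lemma tpair_bvec t i j : tpair t (tens (bvec K i) (bvec K j)) = t i j.
Proof.
rewrite tpair_tens.
transitivity (\sum_k (\sum_l t k l * (j == l)%:R) * (i == k)%:R).
  apply: eq_bigr => k _; rewrite mulr_suml; apply: eq_bigr => l _.
  by rewrite !bvecE; ring.
rewrite sum_delta; exact: sum_delta.
Qed.

Lemma tens_ext t s : (forall a b, tpair t (tens a b) = tpair s (tens a b)) -> t = s.
Proof. by move=> H; apply/matrixP => i j; rewrite -!tpair_bvec. Qed.

Lemma dualmap_pair (f : 'rV[K]_n -> 'rV[K]_n) a x :
  islinear f -> pair (dualmap f a) x = pair a (f x).
Proof. by move=> Hf; exact: (pair_row (lin1_pair_f a Hf)). Qed.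

Lemma dual_br_pair (D : 'rV[K]_n -> 'M[K]_(n, n)) a b x :
  islinearT D -> pair (dual_br D a b) x = tpair (D x) (tens a b).
Proof.
move=> HD; apply: (pair_row (F := fun x => tpair (D x) (tens a b))).
by move=> c u v; rewrite HD tpairDZl.
Qed.

Lemma dual_brDZl (D : 'rV[K]_n -> 'M[K]_(n, n)) c a a' b :
  dual_br D (c *: a + a') b = c *: dual_br D a b + dual_br D a' b.
Proof. by apply/rowP => k; rewrite !mxE tpair_tensDZl. Qed.
Lemma dual_brDZr (D : 'rV[K]_n -> 'M[K]_(n, n)) c a b b' :
  dual_br D a (c *: b + b') = c *: dual_br D a b + dual_br D a b'.
Proof. by apply/rowP => k; rewrite !mxE tpair_tensDZr. Qed.

Lemma dualmap_lin (f : 'rV[K]_n -> 'rV[K]_n) : islinear (dualmap f).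
Proof. by move=> c a b; apply/rowP => k; rewrite !mxE pairDZl. Qed.

Lemma dualmap2 (f : 'rV[K]_n -> 'rV[K]_n) x : islinear f -> dualmap (dualmap f) x = f x.
Proof.
by move=> Hf; apply/rowP => k; rewrite mxE pairC dualmap_pair // pair_bvecl.
Qed.

End Basics.

Section JacGen.
Variables (K : fieldType) (m : nat) (B : 'rV[K]_m -> 'rV[K]_m -> 'rV[K]_m)
  (F : 'rV[K]_m -> 'rV[K]_m).
Hypotheses (Blin : forall z, islinear (B z)) (Bskew : forall x y, B x y = - B y x)
  (Flin : islinear F).
Definition Jac u v w := B (F u) (B v w) + B (F v) (B w u) + B (F w) (B u v).
Lemma JacC u v w : Jac u v w = Jac v w u.
Proof. by rewrite /Jac -addrA addrC. Qed.
Lemma FD (x y : 'rV[K]_m) : F (x + y) = F x + F y.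
Proof. exact: (linD Flin). Qed.
Lemma BDr (x y z : 'rV[K]_m) : B z (x + y) = B z x + B z y.
Proof. exact: (linD (Blin z)). Qed.
Lemma BDl (x y z : 'rV[K]_m) : B (x + y) z = B x z + B y z.
Proof. by rewrite Bskew BDr opprD -!Bskew. Qed.
Lemma JacDl (u1 u2 v w : 'rV[K]_m) : Jac (u1 + u2) v w = Jac u1 v w + Jac u2 v w.
Proof.
rewrite /Jac FD !BDl !BDr ?BDl.
by apply/rowP => k; rewrite !mxE; ring.
Qed.
Lemma JacDm (u v1 v2 w : 'rV[K]_m) : Jac u (v1 + v2) w = Jac u v1 w + Jac u v2 w.
Proof. by rewrite (JacC u (v1 + v2) w) JacDl (JacC u v1 w) (JacC u v2 w). Qed.
Lemma JacDr (u v w1 w2 : 'rV[K]_m) : Jac u v (w1 + w2) = Jac u v w1 + Jac u v w2.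
Proof.
by rewrite (JacC u v) (JacC v) JacDl (JacC w1) (JacC u v w1) (JacC w2) (JacC u v w2).
Qed.
End JacGen.

Lemma tpair_tensDl (K : fieldType) (n : nat) (t : 'M[K]_(n, n)) (a a' b : 'rV[K]_n) :
  tpair t (tens (a + a') b) = tpair t (tens a b) + tpair t (tens a' b).
Proof. by have := tpair_tensDZl t 1 a a' b; rewrite scale1r mul1r. Qed.
Lemma tpair_tensDr (K : fieldType) (n : nat) (t : 'M[K]_(n, n)) (a b b' : 'rV[K]_n) :
  tpair t (tens a (b + b')) = tpair t (tens a b) + tpair t (tens a b').
Proof. by have := tpair_tensDZr t 1 a b b'; rewrite scale1r mul1r. Qed.

Lemma adT_pair (K : fieldType) (m : nat) (B : 'rV[K]_m -> 'rV[K]_m -> 'rV[K]_m)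
  (F : 'rV[K]_m -> 'rV[K]_m) z t a b :
  tpair (adT B F z t) (tens a b) = tpair t (tens (dualmap (B z) a) (dualmap F b))
                                 + tpair t (tens (dualmap F a) (dualmap (B z) b)).
Proof. by rewrite /adT tpairDl !tmap_pair. Qed.

Section CompGen.
Variables (K : fieldType) (m : nat) (B : 'rV[K]_m -> 'rV[K]_m -> 'rV[K]_m)
  (F : 'rV[K]_m -> 'rV[K]_m) (Dl : 'rV[K]_m -> 'M[K]_(m, m)).
Hypotheses (Blin : forall z, islinear (B z)) (Bskew : forall x y, B x y = - B y x)
  (Flin : islinear F) (Dlin : islinearT Dl).
Definition Comp u v := Dl (B u v) - (adT B F (F u) (Dl v) - adT B F (F v) (Dl u)).
Lemma adT_addt z (t1 t2 : 'M[K]_(m, m)) : adT B F z (t1 + t2) = adT B F z t1 + adT B F z t2.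
Proof. by apply: tens_ext => a b; rewrite tpairDl !adT_pair !tpairDl; ring. Qed.
Lemma adT_addz (z1 z2 : 'rV[K]_m) t : adT B F (z1 + z2) t = adT B F z1 t + adT B F z2 t.
Proof.
have E : forall a, dualmap (B (z1 + z2)) a = dualmap (B z1) a + dualmap (B z2) a.
  by move=> a; apply/rowP => k; rewrite !mxE (BDl Blin Bskew) pairDr.
by apply: tens_ext => a b; rewrite tpairDl !adT_pair !E tpair_tensDl tpair_tensDr; ring.
Qed.
Lemma CompDl (u1 u2 v : 'rV[K]_m) : Comp (u1 + u2) v = Comp u1 v + Comp u2 v.
Proof.
rewrite /Comp (BDl Blin Bskew) (linD Dlin) (linD Flin) adT_addz (linD Dlin) adT_addt.
by apply/matrixP => i j; rewrite !mxE; ring.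
Qed.
Lemma CompN (u v : 'rV[K]_m) : Comp v u = - Comp u v.
Proof.
rewrite /Comp (Bskew v u) (linN Dlin).
by apply/matrixP => i j; rewrite !mxE; ring.
Qed.
End CompGen.

Definition dmap (K : fieldType) (n m : nat) (f : 'rV[K]_n -> 'rV[K]_m) (A : 'rV[K]_m)
  : 'rV[K]_n := \row_k pair A (f (bvec K k)).
Lemma tmap_pairG (K : fieldType) (n m : nat) (f g : 'rV[K]_n -> 'rV[K]_m)
  (t : 'M[K]_(n, n)) (A B : 'rV[K]_m) :
  tpair (tmap f g t) (tens A B) = tpair t (tens (dmap f A) (dmap g B)).
Proof.
rewrite /tmap tpair_suml tpair_tens; apply: eq_bigr => i _.
rewrite tpair_suml; apply: eq_bigr => j _.
by rewrite tpairZl tens_tpair !mxE !(pairC A) !(pairC B).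
Qed.

Section Main.
Variables (K : fieldType) (n : nat) (br : 'rV[K]_n -> 'rV[K]_n -> 'rV[K]_n)
  (phi : 'rV[K]_n -> 'rV[K]_n) (Delta : 'rV[K]_n -> 'M[K]_(n, n)).
Hypothesis HB : HomLieBialg br phi Delta.
Implicit Types (a b d e x y z w : 'rV[K]_n).

Local Notation Ps := (dualmap phi).
Local Notation dbr := (dual_br Delta).
Local Notation adTg z a := (dualmap (br z) a).

Fact HLg : HomLie br phi. Proof. by case: HB => [[]]. Qed.
Fact Hwg : weakly_involutive br phi. Proof. by case: HB => [[]]. Qed.
Fact HDlin : islinearT Delta. Proof. by case: HB. Qed.
Fact HLd : HomLie dbr Ps. Proof. by case: HB. Qed.
Fact Hwd : weakly_involutive dbr Ps. Proof. by case: HB. Qed.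
Fact Hcomp x y : Delta (br x y) =
        adT br phi (phi x) (Delta y) - adT br phi (phi y) (Delta x).
Proof. by case: HB => _ _ _ _; apply. Qed.

Fact brlin z : islinear (br z). Proof. by case: HLg. Qed.
Fact brskew x y : br x y = - br y x. Proof. by case: HLg. Qed.
Fact philin : islinear phi. Proof. by case: HLg. Qed.
Fact brphi x y : phi (br x y) = br (phi x) (phi y). Proof. by case: HLg. Qed.
Fact brjac x y z : br (phi x) (br y z) + br (phi y) (br z x) + br (phi z) (br x y) = 0.
Proof. by case: HLg. Qed.
Fact dskew a b : dbr a b = - dbr b a. Proof. by case: HLd. Qed.
Fact dmult a b : Ps (dbr a b) = dbr (Ps a) (Ps b). Proof. by case: HLd. Qed.
Fact djac a b c : dbr (Ps a) (dbr b c) + dbr (Ps b) (dbr c a) + dbr (Ps c) (dbr a b) = 0.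
Proof. by case: HLd. Qed.
Fact winvg x y : br (phi (phi x)) y = br x y. Proof. exact: Hwg. Qed.
Fact winvd a b : dbr (Ps (Ps a)) b = dbr a b. Proof. exact: Hwd. Qed.

Lemma br0r z : br z 0 = 0. Proof. exact: (lin0 (brlin z)). Qed.
Lemma brDr z x y : br z (x + y) = br z x + br z y. Proof. exact: (linD (brlin z)). Qed.
Lemma brZr z c x : br z (c *: x) = c *: br z x. Proof. exact: (linZ (brlin z)). Qed.
Lemma brNr z x : br z (- x) = - br z x. Proof. exact: (linN (brlin z)). Qed.
Lemma brBr z x y : br z (x - y) = br z x - br z y. Proof. exact: (linB (brlin z)). Qed.
Lemma brllin z : islinear (fun x => br x z).
Proof.
move=> c x y /=; rewrite brskew brlin (brskew z x) (brskew z y).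
by rewrite scalerN opprD !opprK.
Qed.
Lemma br0l z : br 0 z = 0. Proof. exact: (lin0 (brllin z)). Qed.
Lemma brDl z x y : br (x + y) z = br x z + br y z. Proof. exact: (linD (brllin z)). Qed.
Lemma brZl z c x : br (c *: x) z = c *: br x z. Proof. exact: (linZ (brllin z)). Qed.
Lemma brNl z x : br (- x) z = - br x z. Proof. exact: (linN (brllin z)). Qed.
Lemma brBl z x y : br (x - y) z = br x z - br y z. Proof. exact: (linB (brllin z)). Qed.

Lemma phi0 : phi 0 = 0. Proof. exact: (lin0 philin). Qed.
Lemma phiD x y : phi (x + y) = phi x + phi y. Proof. exact: (linD philin). Qed.
Lemma phiZ c x : phi (c *: x) = c *: phi x. Proof. exact: (linZ philin). Qed.
Lemma phiN x : phi (- x) = - phi x. Proof. exact: (linN philin). Qed.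
Lemma phiB x y : phi (x - y) = phi x - phi y. Proof. exact: (linB philin). Qed.

Lemma Ps0 : Ps 0 = 0. Proof. exact: (lin0 (dualmap_lin phi)). Qed.
Lemma PsD x y : Ps (x + y) = Ps x + Ps y. Proof. exact: (linD (dualmap_lin phi)). Qed.
Lemma PsZ c x : Ps (c *: x) = c *: Ps x. Proof. exact: (linZ (dualmap_lin phi)). Qed.
Lemma PsN x : Ps (- x) = - Ps x. Proof. exact: (linN (dualmap_lin phi)). Qed.
Lemma PsB x y : Ps (x - y) = Ps x - Ps y. Proof. exact: (linB (dualmap_lin phi)). Qed.

Lemma D0 : Delta 0 = 0. Proof. exact: (lin0 HDlin). Qed.
Lemma DD x y : Delta (x + y) = Delta x + Delta y. Proof. exact: (linD HDlin). Qed.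
Lemma DZ c x : Delta (c *: x) = c *: Delta x. Proof. exact: (linZ HDlin). Qed.
Lemma DN x : Delta (- x) = - Delta x. Proof. exact: (linN HDlin). Qed.
Lemma DB x y : Delta (x - y) = Delta x - Delta y. Proof. exact: (linB HDlin). Qed.

Lemma dlinl b : islinear (fun a => dbr a b).
Proof. by move=> c x y; rewrite dual_brDZl. Qed.
Lemma dlinr a : islinear (dbr a).
Proof. by move=> c x y; rewrite dual_brDZr. Qed.
Lemma dbr0l b : dbr 0 b = 0. Proof. exact: (lin0 (dlinl b)). Qed.
Lemma dbrDl b x y : dbr (x + y) b = dbr x b + dbr y b. Proof. exact: (linD (dlinl b)). Qed.
Lemma dbrZl b c x : dbr (c *: x) b = c *: dbr x b. Proof. exact: (linZ (dlinl b)). Qed.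
Lemma dbrNl b x : dbr (- x) b = - dbr x b. Proof. exact: (linN (dlinl b)). Qed.
Lemma dbrBl b x y : dbr (x - y) b = dbr x b - dbr y b. Proof. exact: (linB (dlinl b)). Qed.
Lemma dbr0r b : dbr b 0 = 0. Proof. exact: (lin0 (dlinr b)). Qed.
Lemma dbrDr b x y : dbr b (x + y) = dbr b x + dbr b y. Proof. exact: (linD (dlinr b)). Qed.
Lemma dbrZr b c x : dbr b (c *: x) = c *: dbr b x. Proof. exact: (linZ (dlinr b)). Qed.
Lemma dbrNr b x : dbr b (- x) = - dbr b x. Proof. exact: (linN (dlinr b)). Qed.
Lemma dbrBr b x y : dbr b (x - y) = dbr b x - dbr b y. Proof. exact: (linB (dlinr b)). Qed.

Definition adTs a x : 'rV[K]_n := \row_k pair (dbr a (bvec K k)) x.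

Lemma adTs_pair a x b : pair b (adTs a x) = pair (dbr a b) x.
Proof.
apply: (pair_rowr (F := fun b => pair (dbr a b) x)).
by move=> c u v; rewrite dual_brDZr pairDZl.
Qed.
Lemma adTg_pair z a y : pair (adTg z a) y = pair a (br z y).
Proof. exact: dualmap_pair (brlin z). Qed.
Lemma Ps_pair a x : pair (Ps a) x = pair a (phi x).
Proof. exact: dualmap_pair philin. Qed.
Lemma dbr_pair a b x : pair (dbr a b) x = tpair (Delta x) (tens a b).
Proof. exact: dual_br_pair HDlin. Qed.

Lemma adTsDZl c a a' x : adTs (c *: a + a') x = c *: adTs a x + adTs a' x.
Proof. by apply/rowP => k; rewrite !mxE dual_brDZl pairDZl. Qed.
Lemma adTsDZr c a x x' : adTs a (c *: x + x') = c *: adTs a x + adTs a x'.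
Proof. by apply/rowP => k; rewrite !mxE pairDZr. Qed.
Lemma adTgDZl c z z' a : adTg (c *: z + z') a = c *: adTg z a + adTg z' a.
Proof. by apply/rowP => k; rewrite !mxE (brllin (bvec K k)) pairDZr. Qed.
Lemma adTgDZr z c a a' : adTg z (c *: a + a') = c *: adTg z a + adTg z a'.
Proof. exact: dualmap_lin. Qed.

Lemma coad_gE x a : coad_g br phi x a = - adTg (phi x) a.
Proof. by apply/rowP => k; rewrite !mxE. Qed.
Lemma coad_gsE a x : coad_gs phi Delta a x = - adTs (Ps a) x.
Proof. by apply/rowP => k; rewrite !mxE pairC. Qed.


Local Notation dbrD := (double_br br phi Delta).
Local Notation dphiD := (double_phi phi).
Local Notation dcob := (double_cobr br phi Delta).

Lemma S2 a x y : pair a (br (phi x) (phi y)) = pair (Ps a) (br x y).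
Proof. by rewrite -brphi Ps_pair. Qed.
Lemma S5 a b x : pair (dbr a b) (phi x) = pair (dbr (Ps a) (Ps b)) x.
Proof. by rewrite -Ps_pair dmult. Qed.
Lemma S4 a b x : pair (dbr a b) x = - pair (dbr b a) x.
Proof. by rewrite dskew pairNl. Qed.
Lemma S1 a x y : pair a (br x y) = - pair a (br y x).
Proof. by rewrite brskew pairNr. Qed.
Lemma S7 a b x y : pair (dbr a b) (br x y) =
   pair (dbr (adTg (phi x) a) (Ps b)) y + pair (dbr (Ps a) (adTg (phi x) b)) y
 - pair (dbr (adTg (phi y) a) (Ps b)) x - pair (dbr (Ps a) (adTg (phi y) b)) x.
Proof.
rewrite !dbr_pair Hcomp tpairBl /adT !tpairDl !tmap_pair.
by rewrite opprD addrA.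
Qed.

Lemma pair_row_mx (a x y c : 'rV[K]_n) :
  pair (row_mx a x) (row_mx y c) = pair a y + pair x c.
Proof.
rewrite /pair big_split_ord /=; congr (_ + _); apply: eq_bigr => i _.
  by rewrite !row_mxEl.
by rewrite !row_mxEr.
Qed.
Lemma pair_lr (U W : 'rV[K]_(n + n)) :
  pair U W = pair (lsubmx U) (lsubmx W) + pair (rsubmx U) (rsubmx W).
Proof. by rewrite -{1}[U]hsubmxK -{1}[W]hsubmxK pair_row_mx. Qed.

Lemma dbrE x a y b : dbrD (row_mx x a) (row_mx y b) =
  row_mx (br x y - adTs (Ps a) y + adTs (Ps b) x)
         (- adTg (phi x) b + adTg (phi y) a + dbr a b).
Proof.
by rewrite /double_br /= !row_mxKl !row_mxKr !coad_gE !coad_gsE !opprK.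
Qed.
Lemma dphiE x a : dphiD (row_mx x a) = row_mx (phi x) (Ps a).
Proof. by rewrite /double_phi row_mxKl row_mxKr. Qed.

Lemma dbrlin u : islinear (dbrD u).
Proof.
move=> c v w; rewrite -[u]hsubmxK -[v]hsubmxK -[w]hsubmxK scale_row_mx add_row_mx.
rewrite !dbrE scale_row_mx add_row_mx; congr row_mx.
  rewrite brlin adTsDZr (dualmap_lin phi) adTsDZl.
  by apply/rowP => k; rewrite !mxE; ring.
rewrite philin adTgDZl adTgDZr dual_brDZr.
by apply/rowP => k; rewrite !mxE; ring.
Qed.
Lemma dphilin : islinear dphiD.
Proof.
move=> c v w; rewrite -[v]hsubmxK -[w]hsubmxK scale_row_mx add_row_mx !dphiE.
by rewrite scale_row_mx add_row_mx philin (dualmap_lin phi).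
Qed.


Lemma lsub_dualmap (f : 'rV[K]_(n + n) -> 'rV[K]_(n + n)) U v : islinear f ->
  pair (lsubmx (dualmap f U)) v = pair U (f (row_mx v 0)).
Proof.
move=> Hf.
have -> : lsubmx (dualmap f U) = \row_i pair U (f (row_mx (bvec K i) 0)).
  by apply/rowP => i; rewrite !mxE /bvec delta_mx_lshift.
apply: (pair_row (F := fun v => pair U (f (row_mx v 0)))) => s v1 v2.
have E : row_mx (s *: v1 + v2) (0 : 'rV[K]_n) = s *: row_mx v1 0 + row_mx v2 0.
  by rewrite scale_row_mx add_row_mx scaler0 addr0.
by rewrite E Hf pairDZr.
Qed.
Lemma rsub_dualmap (f : 'rV[K]_(n + n) -> 'rV[K]_(n + n)) U v : islinear f ->
  pair (rsubmx (dualmap f U)) v = pair U (f (row_mx 0 v)).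
Proof.
move=> Hf.
have -> : rsubmx (dualmap f U) = \row_i pair U (f (row_mx 0 (bvec K i))).
  by apply/rowP => i; rewrite !mxE /bvec delta_mx_rshift.
apply: (pair_row (F := fun v => pair U (f (row_mx 0 v)))) => s v1 v2.
have E : row_mx (0 : 'rV[K]_n) (s *: v1 + v2) = s *: row_mx 0 v1 + row_mx 0 v2.
  by rewrite scale_row_mx add_row_mx scaler0 addr0.
by rewrite E Hf pairDZr.
Qed.

Lemma r_pair A B : tpair (double_r K n) (tens A B) = pair (lsubmx A) (rsubmx B).
Proof.
rewrite /double_r tpair_suml.
transitivity (\sum_i lsubmx A 0 i * rsubmx B 0 i); last by [].
apply: eq_bigr => i _; rewrite tens_tpair (pair_lr _ A) (pair_lr _ B).
by rewrite !row_mxKl !row_mxKr !pair0l addr0 add0r !pair_bvecl.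
Qed.

Lemma lsub_dphi U : lsubmx (dualmap dphiD U) = Ps (lsubmx U).
Proof.
apply/rowP => i; rewrite !mxE /bvec delta_mx_lshift dphiE pair_lr.
by rewrite row_mxKl row_mxKr Ps0 pair0r addr0.
Qed.
Lemma rsub_dphi U : rsubmx (dualmap dphiD U) = phi (rsubmx U).
Proof.
apply/rowP => i; rewrite !mxE /bvec delta_mx_rshift dphiE pair_lr.
rewrite row_mxKl row_mxKr phi0 pair0r add0r.
by rewrite pairC Ps_pair -/(bvec K i) pair_bvecl.
Qed.

Lemma adTs0r a : adTs a 0 = 0.
Proof. by apply/rowP => k; rewrite !mxE pair0r. Qed.
Lemma adTs0l x : adTs 0 x = 0.
Proof. by apply/rowP => k; rewrite !mxE dbr0l pair0l. Qed.
Lemma adTg0r z : adTg z 0 = 0.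
Proof. exact: (lin0 (dualmap_lin (br z))). Qed.
Lemma adTg0l a : adTg 0 a = 0.
Proof. by apply/rowP => k; rewrite !mxE br0l pair0r. Qed.

Lemma cobr_pair z c a x b y :
  tpair (dcob (row_mx z c)) (tens (row_mx a x) (row_mx b y)) =
  pair (dbr a b) z - pair c (br x y).
Proof.
rewrite /double_cobr /adT tpairDl !tmap_pair !r_pair lsub_dphi rsub_dphi.
rewrite row_mxKl row_mxKr (lsub_dualmap _ _ (dbrlin _)) [pair (Ps a) _]pairC (rsub_dualmap _ _ (dbrlin _)).
rewrite !dbrE !pair_row_mx.
rewrite !(br0r, adTs0r, adTs0l, adTg0r, adTg0l, Ps0, phi0, dbr0r, dbr0l).
rewrite !(oppr0, addr0, add0r, subr0) !(pairDr, pairBr, pairNr).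
rewrite !adTs_pair S5 !winvd [pair x _]pairC [pair y (adTg _ _)]pairC !adTg_pair.
rewrite winvg [pair y (dbr _ _)]pairC Ps_pair brphi winvg (S1 c y x).
ring.
Qed.


Lemma cobr_pairG (w U V : 'rV[K]_(n + n)) : tpair (dcob w) (tens U V) =
  pair (dbr (lsubmx U) (lsubmx V)) (lsubmx w) - pair (rsubmx w) (br (rsubmx U) (rsubmx V)).
Proof. by rewrite -{1}[w]hsubmxK -{1}[U]hsubmxK -{1}[V]hsubmxK cobr_pair. Qed.

Lemma dcoblin : islinearT dcob.
Proof.
move=> s u v; apply: tens_ext => U V; rewrite tpairDZl !cobr_pairG.
rewrite -[u]hsubmxK -[v]hsubmxK scale_row_mx add_row_mx !row_mxKl !row_mxKr.
rewrite pairDZr pairDZl; ring.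
Qed.

Lemma ddbrE U V : dual_br dcob U V =
  row_mx (dbr (lsubmx U) (lsubmx V)) (- br (rsubmx U) (rsubmx V)).
Proof.
apply: vec_ext => W; rewrite (dual_br_pair _ _ _ dcoblin) cobr_pairG pair_lr.
by rewrite row_mxKl row_mxKr pairNl [pair (rsubmx W) _]pairC.
Qed.
Lemma ddphiE U : dualmap dphiD U = row_mx (Ps (lsubmx U)) (phi (rsubmx U)).
Proof. by rewrite -lsub_dphi -rsub_dphi hsubmxK. Qed.

Lemma A3hl : HomLie (dual_br dcob) (dualmap dphiD).
Proof.
split.
- move=> Z s U V; rewrite !ddbrE -[U]hsubmxK -[V]hsubmxK -[Z]hsubmxK.
  rewrite scale_row_mx add_row_mx !row_mxKl !row_mxKr scale_row_mx add_row_mx.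
  rewrite dual_brDZr brlin; congr row_mx.
  by apply/rowP => k; rewrite !mxE; ring.
- move=> U V; rewrite !ddbrE opp_row_mx dskew.
  by rewrite (brskew (rsubmx U)).
- exact: dualmap_lin.
- move=> U V; rewrite !ddphiE !ddbrE !row_mxKl !row_mxKr dmult phiN brphi.
  by [].
- move=> U V W; rewrite !ddphiE !ddbrE !row_mxKl !row_mxKr !add_row_mx.
  rewrite !brNr !opprK djac brjac; exact: row_mx0.
Qed.
Lemma A3w : weakly_involutive (dual_br dcob) (dualmap dphiD).
Proof.
move=> U V; rewrite !ddphiE !ddbrE !row_mxKl !row_mxKr.
by rewrite winvd winvg.
Qed.

Lemma phi_adTs a y : phi (adTs (Ps a) y) = adTs (Ps (Ps a)) (phi y).
Proof.
by apply: vec_extr => b; rewrite -Ps_pair !adTs_pair S5 winvd.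
Qed.
Lemma Ps_adTg z a : Ps (adTg (phi z) a) = adTg (phi (phi z)) (Ps a).
Proof.
apply: vec_ext => x; rewrite Ps_pair !adTg_pair S2 winvg.
by [].
Qed.

Lemma adTs_w3 a y : adTs (Ps (Ps (Ps a))) y = adTs (Ps a) y.
Proof. by apply: vec_extr => b; rewrite !adTs_pair winvd. Qed.
Lemma adTs_w2 b x : adTs (Ps b) (phi (phi x)) = adTs (Ps b) x.
Proof.
apply: vec_extr => c; rewrite !adTs_pair !S5 winvd S4 winvd -S4.
by [].
Qed.
Lemma adTg_w3 x b : adTg (phi (phi (phi x))) b = adTg (phi x) b.
Proof. by apply/rowP => k; rewrite !mxE winvg. Qed.
Lemma adTg_w2 y a : adTg (phi y) (Ps (Ps a)) = adTg (phi y) a.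
Proof.
apply: vec_ext => z; rewrite !adTg_pair !Ps_pair !brphi winvg.
rewrite brskew winvg pairNr -pairNr -brskew.
by [].
Qed.


Lemma dbr_skew u v : dbrD u v = - dbrD v u.
Proof.
rewrite -[u]hsubmxK -[v]hsubmxK !dbrE opp_row_mx.
rewrite (brskew (lsubmx u) (lsubmx v)) (dskew (rsubmx u) (rsubmx v)).
by congr row_mx; apply/rowP => k; rewrite !mxE; ring.
Qed.
Lemma dbr_mult u v : dphiD (dbrD u v) = dbrD (dphiD u) (dphiD v).
Proof.
rewrite -[u]hsubmxK -[v]hsubmxK !dbrE !dphiE ?dbrE ?row_mxKl ?row_mxKr; congr row_mx.
  by rewrite phiD phiB brphi !phi_adTs.
by rewrite !PsD PsN !Ps_adTg dmult.
Qed.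
Lemma dbr_winv u v : dbrD (dphiD (dphiD u)) v = dbrD u v.
Proof.
rewrite -[u]hsubmxK -[v]hsubmxK !dphiE !dbrE.
by rewrite winvg adTs_w3 adTs_w2 adTg_w3 adTg_w2 winvd.
Qed.

Local Notation J := (Jac dbrD dphiD).
Local Notation ig x := (row_mx x (0 : 'rV[K]_n)).
Local Notation id_ a := (row_mx (0 : 'rV[K]_n) a).

Ltac zsimp := rewrite ?(Ps0, adTs0l, adTs0r, adTg0r, adTg0l, dbr0l, dbr0r, br0l, br0r,
  phi0, pair0l, pair0r, subr0, addr0, oppr0, add0r, sub0r, row_mx0).

Ltac pexp := rewrite ?(pair0r, pair0l, pairDr, pairDl, pairBr, pairBl, pairNr, pairNl).

Lemma J1 x y z : J (ig x) (ig y) (ig z) = 0.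
Proof.
rewrite /Jac !dphiE; zsimp; rewrite !dbrE; zsimp; rewrite ?dbrE; zsimp.
by rewrite !add_row_mx brjac; zsimp.
Qed.
Lemma J2 x y c : J (ig x) (ig y) (id_ c) = 0.
Proof.
rewrite /Jac !dphiE; zsimp; rewrite !dbrE; zsimp; rewrite ?dbrE; zsimp.
rewrite !add_row_mx -row_mx0; congr row_mx.
  apply: vec_extr => d; rewrite ?brNr; pexp; rewrite -!adTg_pair.
  rewrite !adTs_pair !S5 !winvd dbrNl pairNl (S7 c d x y); ring.
apply: vec_ext => z; pexp; rewrite !adTg_pair; pexp; rewrite ?adTg_pair !winvg.
rewrite Ps_pair brphi !winvg (brskew (br x y) (phi z)) (brskew x z) brNr; pexp.
have := congr1 (pair c) (brjac x y z); rewrite pair0r; pexp => HJ.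
by apply: (closeN HJ); ring.
Qed.
Lemma J3 x b c : J (ig x) (id_ b) (id_ c) = 0.
Proof.
rewrite /Jac !dphiE; zsimp; rewrite !dbrE; zsimp; rewrite ?dbrE; zsimp.
rewrite !add_row_mx -row_mx0; congr row_mx.
  apply: vec_extr => d; pexp; rewrite !adTs_pair !S5 !winvd; pexp; rewrite !adTs_pair.
  rewrite (dskew (dbr b c) (Ps d)) (dskew b d) dbrNr; pexp.
  have := congr1 (fun v => pair v x) (djac b c d); rewrite /= pair0l; pexp => HJ.
  by apply: (closeN HJ); ring.
apply: vec_ext => y; pexp; rewrite !adTg_pair phiN brNl; pexp; rewrite !Ps_pair !brphi !winvg.
rewrite (S7 b c x y) (brskew (adTs (Ps c) x) (phi y)) (brskew (adTs (Ps b) x) (phi y)).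
pexp; rewrite -!adTg_pair !adTs_pair.
rewrite dbrNr pairNl (S4 (adTg (phi y) b) (Ps c)) (S4 (adTg (phi x) b) (Ps c)); ring.
Qed.
Lemma J4 a b c : J (id_ a) (id_ b) (id_ c) = 0.
Proof.
rewrite /Jac !dphiE; zsimp; rewrite !dbrE; zsimp; rewrite ?dbrE; zsimp.
by rewrite !add_row_mx djac; zsimp.
Qed.

Lemma J2b x b z : J (ig x) (id_ b) (ig z) = 0.
Proof. by rewrite JacC JacC J2. Qed.
Lemma J2c a y z : J (id_ a) (ig y) (ig z) = 0.
Proof. by rewrite JacC J2. Qed.
Lemma J3b a y c : J (id_ a) (ig y) (id_ c) = 0.
Proof. by rewrite JacC J3. Qed.
Lemma J3c a b z : J (id_ a) (id_ b) (ig z) = 0.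
Proof. by rewrite JacC JacC J3. Qed.

Lemma split_rm (u : 'rV[K]_(n + n)) : u = ig (lsubmx u) + id_ (rsubmx u).
Proof. by rewrite add_row_mx addr0 add0r hsubmxK. Qed.

Lemma Jdouble (u v w : 'rV[K]_(n + n)) : J u v w = 0.
Proof.
rewrite (split_rm u) (split_rm v) (split_rm w).
have JDl := JacDl dbrlin dbr_skew dphilin.
have JDm := JacDm dbrlin dbr_skew dphilin.
have JDr := JacDr dbrlin dbr_skew dphilin.
rewrite !JDl !JDm !JDr.
by rewrite J1 J2 J2b J2c J3 J3b J3c J4 !addr0.
Qed.


Lemma lsub_adx U x : lsubmx (dualmap (dbrD (ig (phi x))) U) = adTg (phi x) (lsubmx U).
Proof.
apply: vec_ext => v; rewrite (lsub_dualmap _ _ (dbrlin _)) dbrE; zsimp.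
by rewrite pair_lr row_mxKl row_mxKr; zsimp; rewrite adTg_pair.
Qed.
Lemma rsub_adx U x :
  rsubmx (dualmap (dbrD (ig (phi x))) U) = - adTs (Ps (lsubmx U)) x - br x (rsubmx U).
Proof.
apply: vec_ext => b; rewrite (rsub_dualmap _ _ (dbrlin _)) dbrE; zsimp.
rewrite pair_lr row_mxKl row_mxKr; pexp.
rewrite [pair (adTs _ _) b]pairC [pair (br _ _) b]pairC [pair (rsubmx U) _]pairC.
rewrite !adTs_pair adTg_pair S5 !winvd winvg S4.
done.
Qed.
Lemma lsub_ada U a :
  lsubmx (dualmap (dbrD (id_ (Ps a))) U) = - dbr a (lsubmx U) - adTg (phi (rsubmx U)) a.
Proof.
apply: vec_ext => v; rewrite (lsub_dualmap _ _ (dbrlin _)) dbrE; zsimp.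
rewrite pair_lr row_mxKl row_mxKr; pexp.
rewrite [pair (rsubmx U) _]pairC !adTs_pair !adTg_pair winvd Ps_pair brphi winvg.
by rewrite (brskew v) pairNr.
Qed.
Lemma rsub_ada U a : rsubmx (dualmap (dbrD (id_ (Ps a))) U) = adTs (Ps a) (rsubmx U).
Proof.
apply: vec_ext => b; rewrite (rsub_dualmap _ _ (dbrlin _)) dbrE; zsimp.
rewrite pair_lr row_mxKl row_mxKr; pexp.
by rewrite [pair (rsubmx U) _]pairC [pair (adTs _ _) b]pairC adTs_pair add0r.
Qed.

Local Notation C := (Comp dbrD dphiD dcob).

Lemma AdTcob (z v U V : 'rV[K]_(n + n)) :
  tpair (adT dbrD dphiD z (dcob v)) (tens U V) =
    (pair (dbr (lsubmx (dualmap (dbrD z) U)) (Ps (lsubmx V))) (lsubmx v)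
     - pair (rsubmx v) (br (rsubmx (dualmap (dbrD z) U)) (phi (rsubmx V))))
  + (pair (dbr (Ps (lsubmx U)) (lsubmx (dualmap (dbrD z) V))) (lsubmx v)
     - pair (rsubmx v) (br (phi (rsubmx U)) (rsubmx (dualmap (dbrD z) V)))).
Proof.
rewrite adT_pair [X in X + _ = _]cobr_pairG [X in _ + X = _]cobr_pairG.
by rewrite !lsub_dphi !rsub_dphi.
Qed.

Lemma C1 x y : C (ig x) (ig y) = 0.
Proof.
apply: tens_ext => U V; rewrite tpair0l /Comp !tpairBl.
rewrite [X in X - _ = _]cobr_pairG.
rewrite [X in _ - (X - _) = _]AdTcob [X in _ - (_ - X) = _]AdTcob.
rewrite !dphiE ?Ps0 ?phi0; rewrite !lsub_adx !rsub_adx dbrE !row_mxKl !row_mxKr; zsimp.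
by rewrite S7; ring.
Qed.
Lemma C2s a b z w :
 - pair (dbr a b) (br z w) -
  (- pair b (br (adTs (Ps a) z) (phi w)) -
   pair b (br (phi z) (adTs (Ps a) w)) -
   (- pair a (br (adTs (Ps b) z) (phi w)) -
    pair a (br (phi z) (adTs (Ps b) w)))) = 0.
Proof.
rewrite (S7 a b) (brskew (adTs (Ps a) _)) (brskew (adTs (Ps b) _)).
pexp; rewrite -!adTg_pair !adTs_pair.
rewrite (S4 (adTg (phi z) a)) (S4 (adTg (phi w) a)).
ring.
Qed.

Lemma C2 a b : C (id_ a) (id_ b) = 0.
Proof.
apply: tens_ext => U V.
rewrite tpair0l /Comp !tpairBl.
rewrite [X in X - _ = _]cobr_pairG.
rewrite [X in _ - (X - _) = _]AdTcob [X in _ - (_ - X) = _]AdTcob.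
rewrite !dphiE ?Ps0 ?phi0.
rewrite !lsub_ada !rsub_ada.
rewrite dbrE !row_mxKl !row_mxKr.
zsimp.
exact: C2s.
Qed.
Lemma C3 x b : C (ig x) (id_ b) = 0.
Proof.
apply: tens_ext => U V; rewrite tpair0l /Comp !tpairBl.
rewrite [X in X - _ = _]cobr_pairG.
rewrite [X in _ - (X - _) = _]AdTcob [X in _ - (_ - X) = _]AdTcob.
rewrite !dphiE ?Ps0 ?phi0.
rewrite (lsub_adx U x) (lsub_adx V x) (rsub_adx U x) (rsub_adx V x).
rewrite (lsub_ada U b) (lsub_ada V b) (rsub_ada U b) (rsub_ada V b).
rewrite dbrE !row_mxKl !row_mxKr; zsimp.
move: (lsubmx U) (lsubmx V) (rsubmx U) (rsubmx V) => d e z w.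
rewrite ?(brBl, brNl, brBr, brNr, dbrBl, dbrNl, dbrBr, dbrNr); pexp.
rewrite adTs_pair adTg_pair (brskew (adTs (Ps d) x)) (brskew (br x z)) (brskew x w) brNr; pexp.
rewrite -(adTg_pair (phi w) b (adTs (Ps d) x)) -(adTg_pair (phi z) b (adTs (Ps e) x)) !adTs_pair.
rewrite (dskew (dbr b d) (Ps e)) (dskew b e) dbrNr (S4 (Ps e)); pexp.
have := congr1 (pair b) (brjac x z w); rewrite pair0r; pexp => HJ.
have := congr1 (fun v => pair v x) (djac b d e); rewrite /= pair0l; pexp => HJd.
by apply: (close2 HJ HJd); ring.
Qed.


Lemma Cdouble (u v : 'rV[K]_(n + n)) : C u v = 0.
Proof.
have CDl := CompDl dbrlin dbr_skew dphilin dcoblin.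
have CN := CompN dphiD dbr_skew dcoblin.
rewrite (split_rm u) (split_rm v).
move: (lsubmx u) (rsubmx u) (lsubmx v) (rsubmx v) => x a y b.
rewrite CDl (CN (ig y + id_ b) (ig x)) (CN (ig y + id_ b) (id_ a)) !CDl.
rewrite C1 C2 (CN (ig x) (id_ b)) !C3.
by rewrite !(oppr0, addr0).
Qed.

Lemma partA : HomLieBialg dbrD dphiD dcob.
Proof.
split.
- split; last exact: dbr_winv.
  split; [exact: dbrlin | exact: dbr_skew | exact: dphilin | exact: dbr_mult | ].
  by move=> u v w; exact: (Jdouble u v w).
- exact: dcoblin.
- exact: A3hl.
- exact: A3w.
- move=> u v; apply/eqP; rewrite -subr_eq0; apply/eqP; exact: (Cdouble u v).
Qed.

Lemma dm_incl_g U : dmap (incl_g phi) U = Ps (lsubmx U).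
Proof.
apply/rowP => k; rewrite !mxE /incl_g pair_lr row_mxKl row_mxKr pair0r addr0.
done.
Qed.
Lemma dm_incl_gs U : dmap (incl_gs phi) U = phi (rsubmx U).
Proof.
apply/rowP => k; rewrite !mxE /incl_gs pair_lr row_mxKl row_mxKr pair0r add0r.
by rewrite pairC Ps_pair pair_bvecl.
Qed.

Lemma partB : HomLieBialgHom br phi Delta dbrD dphiD dcob (incl_g phi).
Proof.
split.
- by move=> s x y; rewrite /incl_g philin scale_row_mx add_row_mx scaler0 addr0.
- by move=> x y; rewrite /incl_g dbrE; zsimp; rewrite brphi.
- by move=> x; rewrite /incl_g dphiE Ps0.
move=> x; apply: tens_ext => U V.
rewrite tmap_pairG cobr_pairG !dm_incl_g /incl_g row_mxKl row_mxKr pair0l subr0.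
by rewrite -dbr_pair S5.
Qed.

Lemma cobr_dual_pair c x y : tpair (dual_cobr br c) (tens x y) = pair c (br x y).
Proof.
have L1 : lin1 (fun x => pair c (br x y)).
  by move=> s u v; rewrite (brllin y) pairDZr.
rewrite (lin1_sum L1) tpair_tens; apply: eq_bigr => i _.
have L2 : lin1 (fun y => pair c (br (bvec K i) y)).
  by move=> s u v; rewrite brlin pairDZr.
rewrite (lin1_sum L2) mulr_sumr; apply: eq_bigr => j _.
by rewrite mxE; ring.
Qed.

Local Notation Dl' := (fun a => - dual_cobr br a).

Lemma ddE x y : dual_br Dl' x y = - br x y.
Proof.
apply/rowP => k; rewrite !mxE tpairNl cobr_dual_pair pair_bvecl.
done.
Qed.
Lemma dm2 x : dualmap Ps x = phi x.
Proof. exact: (dualmap2 x philin). Qed.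

Lemma partC : HomLieBialg dbr Ps Dl'.
Proof.
split.
- by split; [exact: HLd | exact: Hwd].
- by move=> s a b; apply/matrixP => i j; rewrite /dual_cobr !mxE pairDZl; ring.
- split.
  + by move=> z s x y; rewrite !ddE brlin scalerN opprD.
  + by move=> x y; rewrite !ddE brskew.
  + exact: dualmap_lin.
  + by move=> x y; rewrite !ddE !dm2 phiN brphi.
  + by move=> x y z; rewrite !ddE !dm2 !brNr !opprK; exact: brjac.
- by move=> x y; rewrite !ddE !dm2 winvg.
move=> a b; apply: tens_ext => x y.
rewrite tpairNl cobr_dual_pair tpairBl !adT_pair !dm2.
have E : forall a' x', dualmap (dbr a') x' = adTs a' x'.
  by move=> a' x'; apply/rowP => k; rewrite !mxE pairC.
rewrite !E !tpairNl !cobr_dual_pair.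
by apply/eqP; rewrite -subr_eq0; apply/eqP; exact: C2s.
Qed.

Lemma partD : HomLieBialgHom dbr Ps Dl' dbrD dphiD dcob (incl_gs phi).
Proof.
split.
- by move=> s x y; rewrite /incl_gs (dualmap_lin phi) scale_row_mx add_row_mx scaler0 addr0.
- by move=> a b; rewrite /incl_gs dbrE; zsimp; rewrite dmult.
- by move=> a; rewrite /incl_gs dphiE phi0.
move=> a; apply: tens_ext => U V.
rewrite tmap_pairG cobr_pairG !dm_incl_gs /incl_gs row_mxKl row_mxKr pair0r.
by rewrite tpairNl cobr_dual_pair sub0r S2.
Qed.

End Main.
End Dev.
Import Dev.

Theorem mainTheorem3 (K : fieldType) (n : nat)
  (br : 'rV[K]_n -> 'rV[K]_n -> 'rV[K]_n) (phi : 'rV[K]_n -> 'rV[K]_n)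
  (Delta : 'rV[K]_n -> 'M[K]_(n, n)) :
  HomLieBialg br phi Delta ->
  [/\ HomLieBialg (double_br br phi Delta) (double_phi phi)
        (double_cobr br phi Delta),
      HomLieBialgHom br phi Delta
        (double_br br phi Delta) (double_phi phi) (double_cobr br phi Delta)
        (incl_g phi),
      HomLieBialg (dual_br Delta) (dualmap phi) (fun a => - dual_cobr br a) &
      HomLieBialgHom (dual_br Delta) (dualmap phi) (fun a => - dual_cobr br a)
        (double_br br phi Delta) (double_phi phi) (double_cobr br phi Delta)
        (incl_gs phi)].
Proof.
move=> HB; split; [exact: partA HB | exact: partB HB | exact: partC HB | exact: partD HB].
Qed.
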